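(* For any path $\omega\in\Omega$ that is wCH-random for a computable precise temporal forecasting system $\varphi$: $\big[\liminf_{n\to\infty}\varphi(\omega_{1:n}),\ \limsup_{n\to\infty}\varphi(\omega_{1:n})\big]\subseteq I_\textnormal{wCH}(\omega).$
   Context: $\mathcal{X}=\{0,1\}$; $\Omega=\mathcal{X}^{\mathbb{N}}$ (paths); $\mathbb{S}=\bigcup_{n\ge0}\mathcal X^n$ (situations), $|s|$ length, $\omega_{1:n}=(\omega_1,\dots,\omega_n)$, $\omega_{1:0}$ the empty string. $\mathcal{I}$: nonempty closed intervals $I\subseteq[0,1]$. A forecasting system is $\varphi:\mathbb S\to\mathcal I$, $\underline\varphi=\min\varphi$, $\overline\varphi=\max\varphi$; precise if $\underline\varphi=\overline\varphi$ (then $\varphi(s)$ is identified with the number $\underline\varphi(s)$); temporal if $\varphi(s)=\varphi(t)$ whenever $|s|=|t|$; an interval forecast $I$ is identified with the constant forecasting system $s\mapsto I$. $\varphi$ is computable if there are recursive $\underline q,\overline q:\mathbb S\times\mathbb N_0\to\mathbb Q$ with $|\underline\varphi(s)-\underline q(s,n)|<2^{-n}$ and $|\overline\varphi(s)-\overline q(s,n)|<2^{-n}$. A path $\omega$ is wCH-random for $\varphi$ if for every recursive temporal selection process $S:\mathbb S\to\{0,1\}$ (i.e. $S(s)$ depends only on $|s|$) with $\sum_{k=0}^{n-1}S(\omega_{1:k})\to\infty$: $\liminf_n \frac{\sum_{k<n}S(\omega_{1:k})[\omega_{k+1}-\underline\varphi(\omega_{1:k})]}{\sum_{k<n}S(\omega_{1:k})}\ge0$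 and $\limsup_n \frac{\sum_{k<n}S(\omega_{1:k})[\omega_{k+1}-\overline\varphi(\omega_{1:k})]}{\sum_{k<n}S(\omega_{1:k})}\le0$. $\mathcal I_\textnormal{wCH}(\omega)=\{I\in\mathcal I:\omega\text{ wCH-random for }I\}$, $I_\textnormal{wCH}(\omega)=\bigcap_{I\in\mathcal I_\textnormal{wCH}(\omega)}I$. *)

(* Defs.v *)
From HB Require Import structures.
From mathcomp Require Import all_boot all_order all_algebra.
From mathcomp Require Import all_classical all_reals all_analysis.
From Stdlib Require List.
Set Implicit Arguments. Unset Strict Implicit. Unset Printing Implicit Defensive.
Import Order.TTheory GRing.Theory Num.Theory.

(* minimisation.  Missing arguments default to 0.                     *)
Inductive gen_rec : (seq nat -> nat) -> Prop :=
| gr_zero : gen_rec (fun _ => 0%N)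
| gr_succ : gen_rec (fun l => (head 0%N l).+1)
| gr_proj (i : nat) : gen_rec (fun l => nth 0%N l i)
| gr_comp (f : seq nat -> nat) (gs : seq (seq nat -> nat)) :
    gen_rec f -> (forall g, Stdlib.Lists.List.In g gs -> gen_rec g) ->
    gen_rec (fun l => f (map (fun g => g l) gs))
| gr_prec (f g F : seq nat -> nat) :
    gen_rec f -> gen_rec g ->
    F [::] = f [::] ->
    (forall l, F (0%N :: l) = f l) ->
    (forall n l, F (n.+1 :: l) = g (n :: F (n :: l) :: l)) ->
    gen_rec F
| gr_mu (f F : seq nat -> nat) :
    gen_rec f ->
    (forall l, f (F l :: l) = 0%N /\ (forall k, (k < F l)%N -> f (k :: l) <> 0%N)) ->
    gen_rec F.

(* the string b1...bn is coded by the number with binary digits 1b1...bn. *)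
Definition encode_seq (s : seq bool) : nat :=
  foldl (fun acc (b : bool) => (acc.*2 + b)%N) 1%N s.

(* Standard decoding of naturals into rationals (surjective, recursive):
   m+1 = 2^a * (2b+1) gives the pair (a,b); a is read as an integer via
   the zigzag coding and the rational is that integer divided by b+1. *)
Definition decode_pair (m : nat) : nat * nat :=
  let a := logn 2 m.+1 in (a, ((m.+1 %/ 2 ^ a)%N)./2).
Definition zigzag (a : nat) : int :=
  (if odd a then - (a./2.+1)%:Z else (a./2)%:Z)%R.
Definition decode_rat (m : nat) : rat :=
  let p := decode_pair m in ((zigzag p.1)%:~R / (p.2.+1)%:R)%R.

Definition recursive_sel (S : seq bool -> bool) : Prop :=
  exists F, gen_rec F /\ forall s, F [:: encode_seq s] = nat_of_bool (S s).

Definition recursive_rat (q : seq bool -> nat -> rat) : Prop :=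
  exists F, gen_rec F /\ forall s n, decode_rat (F [:: encode_seq s; n]) = q s n.

Section Forecasting.
Variable R : realType.
Local Open Scope ring_scope.
Local Open Scope classical_set_scope.
Import numFieldNormedType.Exports.

(* omega_{1:n} : the first n outcomes (omega_k is  omega (k-1)). *)
Definition path_prefix (w : nat -> bool) (n : nat) : seq bool := mkseq w n.

(* A forecasting system phi : S -> I is represented by its lower and
   upper bounds  lo = underline phi,  hi = overline phi. *)
Definition forecasting_system (lo hi : seq bool -> R) : Prop :=
  forall s, 0 <= lo s /\ lo s <= hi s /\ hi s <= 1.

Definition temporal_fun (T : Type) (f : seq bool -> T) : Prop :=
  forall s t, size s = size t -> f s = f t.

Definition computable_fs (lo hi : seq bool -> R) : Prop :=
  exists ql qh : seq bool -> nat -> rat,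
    recursive_rat ql /\ recursive_rat qh /\
    forall s n, `|lo s - ratr (ql s n)| < 2%:R ^- n /\
                `|hi s - ratr (qh s n)| < 2%:R ^- n.

Definition sel_count (S : seq bool -> bool) (w : nat -> bool) (n : nat) : R :=
  \sum_(k < n) (S (path_prefix w k))%:R.

Definition sel_avg (S : seq bool -> bool) (w : nat -> bool) (f : seq bool -> R)
    (n : nat) : R :=
  (\sum_(k < n) (S (path_prefix w k))%:R * ((w k)%:R - f (path_prefix w k)))
    / sel_count S w n.

Definition wCH_random (lo hi : seq bool -> R) (w : nat -> bool) : Prop :=
  forall S : seq bool -> bool,
    recursive_sel S -> temporal_fun S ->
    sel_count S w @ \oo --> +oo ->
    0 <= limn_inf (sel_avg S w lo) /\ limn_sup (sel_avg S w hi) <= 0.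

Definition interval01 (a b : R) : Prop := 0 <= a /\ a <= b /\ b <= 1.

Definition I_wCH (w : nat -> bool) : set R :=
  [set x | forall a b : R, interval01 a b ->
             wCH_random (fun _ => a) (fun _ => b) w -> a <= x <= b].

End Forecasting.

(* Main.v *)
Require Import Defs.
From HB Require Import structures.
From mathcomp Require Import all_boot all_order all_algebra.
From mathcomp Require Import all_classical all_reals all_analysis.
From mathcomp Require Import lra zify.
Import Order.TTheory GRing.Theory Num.Theory.

Module MB.
Set Implicit Arguments. Unset Strict Implicit.

Lemma gr_ext F G : gen_rec F -> (forall l, F l = G l) -> gen_rec G.
Proof. by move=> h e; have -> : G = F by apply: funext => l; rewrite e. Qed.

Lemma gr_c1 f g : gen_rec f -> gen_rec g -> gen_rec (fun l => f [:: g l]).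
Proof.
move=> hf hg; apply: (gr_ext (gr_comp hf (gs := [:: g]) _)) => // g0 /=.
by case=> // <-.
Qed.

Lemma gr_c2 f g h : gen_rec f -> gen_rec g -> gen_rec h ->
  gen_rec (fun l => f [:: g l; h l]).
Proof.
move=> hf hg hh; apply: (gr_ext (gr_comp hf (gs := [:: g; h]) _)) => // g0 /=.
by case=> [<-|[<-|]].
Qed.

Lemma gr_cst k : gen_rec (fun _ => k).
Proof.
elim: k => [|k IH]; first exact: gr_zero.
exact: (gr_ext (gr_c1 gr_succ IH)).
Qed.

Lemma G_succ g : gen_rec g -> gen_rec (fun l => (g l).+1).
Proof. by move=> hg; apply: (gr_ext (gr_c1 gr_succ hg)). Qed.

Definition rec1 (f : nat -> nat) := gen_rec (fun l => f (nth 0 l 0)).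
Definition rec2 (f : nat -> nat -> nat) := gen_rec (fun l => f (nth 0 l 0) (nth 0 l 1)).

Lemma rec1C f g : rec1 f -> gen_rec g -> gen_rec (fun l => f (g l)).
Proof. by move=> hf hg; apply: (gr_ext (gr_c1 hf hg)). Qed.
Lemma rec2C f g h : rec2 f -> gen_rec g -> gen_rec h -> gen_rec (fun l => f (g l) (h l)).
Proof. by move=> hf hg hh; apply: (gr_ext (gr_c2 hf hg hh)). Qed.

Lemma rec2_add : rec2 addn.
Proof.
apply: (@gr_prec (fun l => nth 0 l 0) (fun l => (nth 0 l 1).+1)).
- exact: gr_proj.
- exact: G_succ (gr_proj 1).
- by [].
- by move=> l /=; rewrite add0n.
- by move=> n l /=; rewrite addSn.
Qed.

Lemma G_add g h : gen_rec g -> gen_rec h -> gen_rec (fun l => g l + h l).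
Proof. exact: rec2C rec2_add. Qed.

Lemma rec2_mul : rec2 muln.
Proof.
apply: (@gr_prec (fun l => 0) (fun l => nth 0 l 1 + nth 0 l 2)).
- exact: gr_cst.
- exact: G_add (gr_proj 1) (gr_proj 2).
- by [].
- by move=> l /=; rewrite mul0n.
- by move=> n l /=; rewrite mulSn addnC.
Qed.

Lemma G_mul g h : gen_rec g -> gen_rec h -> gen_rec (fun l => g l * h l).
Proof. exact: rec2C rec2_mul. Qed.

Lemma rec1_pred : rec1 predn.
Proof.
apply: (@gr_prec (fun l => 0) (fun l => nth 0 l 0)).
- exact: gr_cst.
- exact: gr_proj.
- by [].
- by [].
- by [].
Qed.

Lemma rsub : gen_rec (fun l => nth 0 l 1 - nth 0 l 0).
Proof.
apply: (@gr_prec (fun l => nth 0 l 0) (fun l => (nth 0 l 1).-1)).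
- exact: gr_proj.
- exact: rec1C rec1_pred (gr_proj 1).
- by [].
- by move=> l /=; rewrite subn0.
- by move=> n l /=; rewrite subnS.
Qed.

Lemma G_sub g h : gen_rec g -> gen_rec h -> gen_rec (fun l => g l - h l).
Proof.
move=> hg hh; have hs : rec2 subn.
  by rewrite /rec2; apply: (gr_ext (@rec2C (fun x y => y - x) _ _ rsub (gr_proj 1) (gr_proj 0))).
exact: (rec2C hs hg hh).
Qed.

Lemma rec1_pow2 : rec1 (expn 2).
Proof.
apply: (@gr_prec (fun l => 1) (fun l => nth 0 l 1 + nth 0 l 1)).
- exact: gr_cst.
- exact: G_add (gr_proj 1) (gr_proj 1).
- by [].
- by [].
- by move=> n l /=; rewrite expnS mul2n addnn.
Qed.

Lemma G_pow2 g : gen_rec g -> gen_rec (fun l => 2 ^ g l).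
Proof. exact: rec1C rec1_pow2. Qed.

Ltac build := repeat first
  [ apply: G_add | apply: G_mul | apply: G_sub | apply: G_pow2 | apply: G_succ
  | apply: gr_proj | apply: gr_cst ].

Lemma rec1_half : rec1 half.
Proof.
rewrite /rec1 /rec2; apply: (@gr_mu (fun l => (nth 0 l 1).+1 - (nth 0 l 0 + nth 0 l 0 + 2))).
  by build.
move=> l /=; set x := nth 0 l 0; have := odd_double_half x; rewrite -addnn.
have : (odd x <= 1)%N by case: odd.
move=> h1 h2; split; first lia.
move=> k hk; lia.
Qed.

Lemma G_half g : gen_rec g -> gen_rec (fun l => (g l)./2).
Proof. exact: rec1C rec1_half. Qed.

Lemma rec2_div : rec2 (fun x k => x %/ 2 ^ k).
Proof.
rewrite /rec2; apply: (@gr_mu (fun l => (nth 0 l 1).+1 - (nth 0 l 0).+1 * 2 ^ (nth 0 l 2))).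
  by build.
move=> l /=; set x := nth 0 l 0; set k := nth 0 l 1.
have d0 : (0 < 2 ^ k)%N by rewrite expn_gt0.
split; first by apply/eqP; rewrite subn_eq0; exact: ltn_ceil.
move=> q hq; apply/eqP; rewrite subn_eq0 -ltnNge ltnS.
apply: leq_trans (leq_divM x (2 ^ k)); by rewrite leq_mul2r hq orbT.
Qed.

Lemma G_div g h : gen_rec g -> gen_rec h -> gen_rec (fun l => g l %/ 2 ^ h l).
Proof. exact: rec2C rec2_div. Qed.

Lemma rec1_val : rec1 (fun y => logn 2 y.+1).
Proof.
rewrite /rec1; apply: (@gr_mu (fun l => 1 - ((nth 0 l 1).+1 - (nth 0 l 1).+1 %/ 2 ^ (nth 0 l 0).+1 * 2 ^ (nth 0 l 0).+1))).
  by build; apply: G_div; build.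
move=> l /=; set y := nth 0 l 0.
have E k : (y.+1 - y.+1 %/ 2 ^ k * 2 ^ k = y.+1 %% 2 ^ k)%N.
  by rewrite {1}(divn_eq y.+1 (2 ^ k)) addKn.
split.
  rewrite E; apply/eqP; rewrite subn_eq0 lt0n; apply: contraTN isT => /eqP h.
  have : (2 ^ (logn 2 y.+1).+1 %| y.+1)%N by rewrite /dvdn h.
  by rewrite pfactor_dvdn // ltnn.
move=> k hk; rewrite E.
have : (2 ^ k.+1 %| y.+1)%N by rewrite pfactor_dvdn.
by rewrite /dvdn => /eqP ->.
Qed.

Lemma G_val g : gen_rec g -> gen_rec (fun l => logn 2 (g l).+1).
Proof. exact: rec1C rec1_val. Qed.

Lemma rec1_tlog : rec1 (trunc_log 2).
Proof.
rewrite /rec1; apply: (@gr_mu (fun l => (nth 0 l 1).+1 - 2 ^ (nth 0 l 0).+1)).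
  by build.
move=> l /=; set m := nth 0 l 0.
split; first by apply/eqP; rewrite subn_eq0; exact: trunc_log_ltn.
move=> k hk; apply/eqP; rewrite subn_eq0 -ltnNge ltnS.
have m0 : (0 < m)%N.
  by rewrite lt0n; apply: contraTN hk => /eqP ->; rewrite trunc_log0.
apply: leq_trans (trunc_logP (isT : 1 < 2)%N m0).
by rewrite leq_exp2l.
Qed.

Lemma G_tlog g : gen_rec g -> gen_rec (fun l => trunc_log 2 (g l)).
Proof. exact: rec1C rec1_tlog. Qed.

Lemma G_odd g : gen_rec g -> gen_rec (fun l => nat_of_bool (odd (g l))).
Proof.
move=> hg; apply: (gr_ext (G_sub hg (G_add (G_half hg) (G_half hg)))) => l.
have := odd_double_half (g l); rewrite -addnn; lia.
Qed.

Lemma G_sg g : gen_rec g -> gen_rec (fun l => nat_of_bool (0 < g l)%N).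
Proof.
move=> hg; apply: (gr_ext (G_sub (gr_cst 1) (G_sub (gr_cst 1) hg))) => l.
by case: (g l).
Qed.

End MB.
Import MB.

Module MC.
Set Implicit Arguments. Unset Strict Implicit.
Local Open Scope ring_scope.

Definition dA y := logn 2 y.+1.
Definition dC y := (y.+1 %/ 2 ^ dA y)./2.
Definition zp y := ((1 - odd (dA y)) * (dA y)./2)%N.
Definition zm y := (odd (dA y) * ((dA y)./2).+1)%N.

Lemma fcmp (F : realFieldType) (z : int) (C u v : nat) : (0 < v)%N ->
  ((z%:~R / (C.+1)%:R < (u%:Z)%:~R / (v%:Z)%:~R :> F) = (z * v%:Z < u%:Z * (C.+1)%:Z)) /\
  (((u%:Z)%:~R / (v%:Z)%:~R < z%:~R / (C.+1)%:R :> F) = (u%:Z * (C.+1)%:Z < z * v%:Z)).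
Proof.
move=> v0.
have C0 : (0 < (C.+1)%:R :> F)%R by rewrite ltr0n.
have V0 : (0 < (v%:Z)%:~R :> F)%R by rewrite ltr0z ltz_nat.
rewrite !ltr_pdivrMr // mulrAC !ltr_pdivlMr //.
have hC : (C.+1)%:R = ((C.+1)%:Z)%:~R :> F by [].
rewrite hC -!intrM !ltr_int; split => //.
by rewrite mulrAC ltr_pdivlMr // -(ltr_int F) !intrM.
Qed.
Lemma decode_cmp (r : rat) (y : nat) : (0 <= r)%R ->
  let u := absz (numq r) in let v := absz (denq r) in
  ((decode_rat y < r)%R = (zp y * v < u * (dC y).+1 + zm y * v)%N) /\
  ((r < decode_rat y)%R = (u * (dC y).+1 + zm y * v < zp y * v)%N).
Proof.
move=> r0 u v.
have hn : numq r = u%:Z by rewrite /u gez0_abs // numq_ge0.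
have hd : denq r = v%:Z by rewrite /v gez0_abs // ltW // denq_gt0.
have v0 : (0 < v)%N by rewrite -ltz_nat -hd denq_gt0.
have E : decode_rat y = ((zigzag (dA y))%:~R / ((dC y).+1)%:R).
  rewrite /decode_rat /decode_pair; cbv beta zeta; cbn [fst snd]; reflexivity.
have Er : r = (u%:Z)%:~R / (v%:Z)%:~R by rewrite -hn -hd divq_num_den.
have [h1 h2] := fcmp rat (zigzag (dA y)) (dC y) u v0.
rewrite -Er in h1 h2; rewrite E h1 h2.
rewrite /zp /zm /zigzag; case: (odd (dA y)) => /=; split; lia.
Qed.

End MC.
Import MC.

Module MD.
Set Implicit Arguments. Unset Strict Implicit.

Lemma enc_gen (s : seq bool) acc :
  (acc * 2 ^ size s <= foldl (fun acc (b : bool) => (acc.*2 + b)%N) acc s < acc.+1 * 2 ^ size s)%N.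
Proof.
elim: s acc => [|b t IH] acc /=; first by rewrite !muln1 leqnn ltnSn.
have /andP[h1 h2] := IH (acc.*2 + b); rewrite expnS.
move: h1 h2; set P := (2 ^ size t)%N; set X := foldl _ _ t.
rewrite -addnn; clearbody X; case: b => /= h1 h2; apply/andP; split; nia.
Qed.

Lemma enc_nseq n : encode_seq (nseq n false) = (2 ^ n)%N.
Proof.
rewrite /encode_seq; suff H : forall acc, foldl (fun acc (b : bool) => (acc.*2 + b)%N) acc (nseq n false) = (acc * 2 ^ n)%N.
  by rewrite H mul1n.
elim: n => [|n IH] acc /=; first by rewrite muln1.
by rewrite IH addn0 expnS -addnn; nia.
Qed.

Lemma tlog_enc s : trunc_log 2 (encode_seq s) = size s.
Proof.
apply: trunc_log_eq => //; have := enc_gen s 1; rewrite mul1n.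
by rewrite expnS mul2n -muln2 mulnC.
Qed.

Definition ltT (u v y : nat) : nat := nat_of_bool (0 < (u * (dC y).+1 + zm y * v) - zp y * v)%N.
Definition gtT (u v y : nat) : nat := nat_of_bool (0 < zp y * v - (u * (dC y).+1 + zm y * v))%N.

Ltac build2 := repeat first
  [ assumption | apply: G_sg | apply: G_odd | apply: G_val | apply: G_div | apply: G_half
  | apply: G_add | apply: G_mul | apply: G_sub | apply: G_pow2 | apply: G_succ
  | apply: gr_proj | apply: gr_cst ].

Lemma G_ltT u v g : gen_rec g -> gen_rec (fun l => ltT u v (g l)).
Proof. move=> hg; rewrite /ltT /dC /zm /zp /dA; build2. Qed.
Lemma G_gtT u v g : gen_rec g -> gen_rec (fun l => gtT u v (g l)).
Proof. move=> hg; rewrite /gtT /dC /zm /zp /dA; build2. Qed.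

Lemma sel_rec (q : seq bool -> nat -> rat) (N : nat) (r : rat) :
  recursive_rat q -> (0 <= r)%R ->
  recursive_sel (fun s => (q (nseq (size s) false) N < r)%R) /\
  recursive_sel (fun s => (r < q (nseq (size s) false) N)%R).
Proof.
move=> [Fq [hF hq]] r0.
have hg : gen_rec (fun l => Fq [:: 2 ^ trunc_log 2 (nth 0 l 0); N]).
  by apply: gr_c2 => //; [apply: G_pow2; apply: G_tlog; apply: gr_proj|apply: gr_cst].
have key s : Fq [:: 2 ^ trunc_log 2 (nth 0 [:: encode_seq s] 0); N] = Fq [:: encode_seq (nseq (size s) false); N].
  by rewrite /= tlog_enc enc_nseq.
split.
- exists (fun l => ltT `|numq r| `|denq r| (Fq [:: 2 ^ trunc_log 2 (nth 0 l 0); N])); split.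
    exact: G_ltT.
  move=> s; rewrite key -hq; have [-> _] := decode_cmp (Fq [:: encode_seq (nseq (size s) false); N]) r0.
  by rewrite /ltT subn_gt0.
- exists (fun l => gtT `|numq r| `|denq r| (Fq [:: 2 ^ trunc_log 2 (nth 0 l 0); N])); split.
    exact: G_gtT.
  move=> s; rewrite key -hq; have [_ ->] := decode_cmp (Fq [:: encode_seq (nseq (size s) false); N]) r0.
  by rewrite /gtT subn_gt0.
Qed.

End MD.
Import MD.

Module ME.
Local Open Scope classical_set_scope.
Local Open Scope ring_scope.
Set Implicit Arguments. Unset Strict Implicit.
Section S.
Variable R : realType.
Implicit Types u v : nat -> R.

Lemma rng_ub u M : (forall n, `|u n| <= M) -> has_ubound (range u).
Proof. move=> h; exists M => _ [n _ <-]; exact: le_trans (ler_norm _) (h n). Qed.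
Lemma rng_lb u M : (forall n, `|u n| <= M) -> has_lbound (range u).
Proof. move=> h; exists (- M) => _ [n _ <-]; by move: (h n); rewrite ler_norml => /andP[]. Qed.

Lemma liminfE' u M : (forall n, `|u n| <= M) -> limn_inf u = sup (range (infs u)).
Proof. by move=> h; apply/cvg_lim => //; apply: cvg_infs_sup; [exact: rng_ub h|exact: rng_lb h]. Qed.
Lemma limsupE' u M : (forall n, `|u n| <= M) -> limn_sup u = inf (range (sups u)).
Proof. by move=> h; apply/cvg_lim => //; apply: cvg_sups_inf; [exact: rng_ub h|exact: rng_lb h]. Qed.

Lemma infs_le u M n k : (forall n, `|u n| <= M) -> (n <= k)%N -> infs u n <= u k.
Proof. move=> h nk; apply: ge_inf; last by exists k.
by apply: has_lbound_sdrop; exact: rng_lb h. Qed.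
Lemma sups_ge u M n k : (forall n, `|u n| <= M) -> (n <= k)%N -> u k <= sups u n.
Proof. move=> h nk; apply: ub_le_sup; last by exists k.
by apply: has_ubound_sdrop; exact: rng_ub h. Qed.

Lemma core u v (M eta : R) N : (forall n, `|u n| <= M) -> (forall n, `|v n| <= M) -> 0 < eta ->
  (forall n, (N <= n)%N -> u n <= v n - eta) -> 0 <= limn_inf u -> limn_sup v <= 0 -> False.
Proof.
move=> hu hv e0 huv; rewrite (liminfE' hu) (limsupE' hv) => h1 h2.
have [_ [n1 _ <-] hn1] : exists2 y, range (infs u) y & - (eta/2) < y.
  apply: sup_gt; first by exists (infs u 0); exists 0%N.
  by apply: (lt_le_trans _ h1); rewrite oppr_lt0 divr_gt0.
have [_ [n2 _ <-] hn2] : exists2 y, range (sups v) y & y < eta/2.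
  apply: inf_lt; first by exists (sups v 0); exists 0%N.
  by apply: (le_lt_trans h2); rewrite divr_gt0.
pose n := maxn N (maxn n1 n2).
have := infs_le hu (leq_trans (leq_maxl n1 n2) (leq_maxr N _)).
have := sups_ge hv (leq_trans (leq_maxr n1 n2) (leq_maxr N _)).
have := huv _ (leq_maxl N (maxn n1 n2)).
rewrite -/n => a b c. have : eta = eta/2 + eta/2 by rewrite -splitr.
lra.
Qed.

Implicit Types (S : seq bool -> bool) (w : nat -> bool) (f : seq bool -> R) (a b th : R).

Lemma count_S S w n : sel_count R S w n.+1 = sel_count R S w n + (S (path_prefix w n))%:R.
Proof. by rewrite /sel_count big_ord_recr. Qed.

Lemma count_ge0 S w n : 0 <= sel_count R S w n.
Proof. by apply: sumr_ge0 => k _; rewrite ler0n. Qed.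

Lemma count_mono S w m n : (m <= n)%N -> sel_count R S w m <= sel_count R S w n.
Proof.
elim: n => [|n IH]; first by rewrite leqn0 => /eqP ->.
rewrite leq_eqVlt => /orP[/eqP->//|]; rewrite ltnS => /IH h.
by rewrite count_S; apply: (le_trans h); rewrite lerDl ler0n.
Qed.

Lemma count_inf S w : (forall N, exists2 k, (N <= k)%N & S (path_prefix w k)) ->
  sel_count R S w @ \oo --> +oo.
Proof.
move=> io.
have hm : forall m : nat, exists n, m%:R <= sel_count R S w n.
  elim=> [|m [n hn]]; first by exists 0%N; rewrite count_ge0.
  have [k nk hk] := io n; exists k.+1.
  rewrite count_S hk -natr1 lerD //; exact: le_trans hn (count_mono _ _ nk).
apply/cvgryPger => A _; have [n hn] := hm (Num.trunc A).+1.
exists n => // j /= hj; apply: (le_trans (ltW (truncnS_gt A))).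
exact: le_trans hn (count_mono _ _ hj).
Qed.

Lemma avg_bnd S w f n : (forall s, 0 <= f s <= 1) -> `|sel_avg S w f n| <= 1.
Proof.
move=> hf; rewrite /sel_avg normrM normfV.
have [->|c0] := eqVneq (sel_count R S w n) 0; first by rewrite normr0 invr0 mulr0.
have cp : 0 < sel_count R S w n by rewrite lt_def c0 count_ge0.
rewrite (ger0_norm (ltW cp)) ler_pdivrMr // mul1r.
apply: (le_trans (ler_norm_sum _ _ _)); apply: ler_sum => k _.
rewrite normrM ger0_norm ?ler0n //; case: (S _) => /=; last by rewrite !mul0r.
rewrite !mul1r; have := hf (path_prefix w k); case: (w k) => /= /andP[h1 h2].
  by rewrite ger0_norm; lra.
by rewrite ler0_norm; lra.
Qed.

Lemma avg_split S w f a n : sel_avg S w (fun _ => a) n =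
  sel_avg S w f n + (\sum_(k < n) (S (path_prefix w k))%:R * (f (path_prefix w k) - a)) / sel_count R S w n.
Proof.
rewrite /sel_avg -mulrDl -big_split /=; congr (_ / _); apply: eq_bigr => k _.
by rewrite -mulrDr addrA subrK.
Qed.

Lemma sum_lo S w f a th n : (forall k, S (path_prefix w k) -> f (path_prefix w k) <= th) ->
  \sum_(k < n) (S (path_prefix w k))%:R * (f (path_prefix w k) - a) <= (th - a) * sel_count R S w n.
Proof.
move=> h; rewrite /sel_count mulr_sumr; apply: ler_sum => k _.
have := h k; case: (S _) => /= hk; last by rewrite !mul0r mulr0.
by rewrite mul1r mulr1 lerB // hk.
Qed.

Lemma sum_hi S w f b th n : (forall k, S (path_prefix w k) -> th <= f (path_prefix w k)) ->
  (th - b) * sel_count R S w n <= \sum_(k < n) (S (path_prefix w k))%:R * (f (path_prefix w k) - b).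
Proof.
move=> h; rewrite /sel_count mulr_sumr; apply: ler_sum => k _.
have := h k; case: (S _) => /= hk; last by rewrite !mul0r mulr0.
by rewrite mul1r mulr1 lerB // hk.
Qed.

Lemma part_lo (p : seq bool -> R) w S a th :
  (forall s, 0 <= p s <= 1) -> 0 <= a <= 1 -> th < a ->
  (forall k, S (path_prefix w k) -> p (path_prefix w k) <= th) ->
  (forall N, exists2 k, (N <= k)%N & S (path_prefix w k)) ->
  0 <= limn_inf (sel_avg S w (fun _ => a)) -> limn_sup (sel_avg S w p) <= 0 -> False.
Proof.
move=> hp ha tha hS io h1 h2.
have [k0 _ hk0] := io 0%N.
apply: (@core _ _ 1 (a - th) k0.+1 _ _ _ _ h1 h2).
- by move=> n; apply: avg_bnd => s; rewrite ha.
- by move=> n; apply: avg_bnd.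
- by rewrite subr_gt0.
move=> n hn; rewrite (avg_split _ _ p).
have cp : 0 < sel_count R S w n.
  apply: (lt_le_trans _ (count_mono S w hn)); rewrite count_S hk0.
  by apply: (lt_le_trans ltr01); rewrite lerDr count_ge0.
have := sum_lo a n hS; rewrite -ler_pdivrMr // => h; lra.
Qed.

Lemma part_hi (p : seq bool -> R) w S b th :
  (forall s, 0 <= p s <= 1) -> 0 <= b <= 1 -> b < th ->
  (forall k, S (path_prefix w k) -> th <= p (path_prefix w k)) ->
  (forall N, exists2 k, (N <= k)%N & S (path_prefix w k)) ->
  0 <= limn_inf (sel_avg S w p) -> limn_sup (sel_avg S w (fun _ => b)) <= 0 -> False.
Proof.
move=> hp hb thb hS io h1 h2.
have [k0 _ hk0] := io 0%N.
apply: (@core _ _ 1 (th - b) k0.+1 _ _ _ _ h1 h2).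
- by move=> n; apply: avg_bnd.
- by move=> n; apply: avg_bnd => s; rewrite hb.
- by rewrite subr_gt0.
move=> n hn; rewrite (avg_split _ _ p).
have cp : 0 < sel_count R S w n.
  apply: (lt_le_trans _ (count_mono S w hn)); rewrite count_S hk0.
  by apply: (lt_le_trans ltr01); rewrite lerDr count_ge0.
have := sum_hi b n hS; rewrite -ler_pdivlMr // => h; lra.
Qed.
End S.

End ME.
Import ME.

Module MF.
Local Open Scope classical_set_scope.
Local Open Scope ring_scope.
Set Implicit Arguments. Unset Strict Implicit.

Section T.
Variable R : realType.
Implicit Types (c : nat -> R).

Lemma io_lo c (M d : R) : (forall n, `|c n| <= M) -> 0 < d ->
  forall N, exists2 k, (N <= k)%N & c k < limn_inf c + d.
Proof.
move=> hc d0 N; apply: contrapT => H.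
have H' : forall k, (N <= k)%N -> limn_inf c + d <= c k.
  move=> k hk; rewrite leNgt; apply/negP => h; apply: H; by exists k.
have h1 : limn_inf c + d <= infs c N.
  apply: lb_le_inf; first by exists (c N); exists N => /=.
  by move=> _ [k /= hk <-]; apply: H'.
have h2 : infs c N <= limn_inf c.
  rewrite (liminfE' hc); apply: ub_le_sup; last by exists N.
  exists M => _ [n _ <-]; apply: le_trans (infs_le hc (leqnn n)) _.
  exact: le_trans (ler_norm _) (hc n).
lra.
Qed.

Lemma io_hi c (M d : R) : (forall n, `|c n| <= M) -> 0 < d ->
  forall N, exists2 k, (N <= k)%N & limn_sup c - d < c k.
Proof.
move=> hc d0 N; apply: contrapT => H.
have H' : forall k, (N <= k)%N -> c k <= limn_sup c - d.
  move=> k hk; rewrite leNgt; apply/negP => h; apply: H; by exists k.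
have h1 : sups c N <= limn_sup c - d.
  apply: ge_sup; first by exists (c N); exists N => /=.
  by move=> _ [k /= hk <-]; apply: H'.
have h2 : limn_sup c <= sups c N.
  rewrite (limsupE' hc); apply: ge_inf; last by exists N.
  exists (- M) => _ [n _ <-]; apply: le_trans _ (sups_ge hc (leqnn n)).
  by move: (hc n); rewrite ler_norml => /andP[].
lra.
Qed.

Lemma liminf_ge0 c : (forall n, 0 <= c n <= 1) -> 0 <= limn_inf c.
Proof.
move=> h; have hc : forall n, `|c n| <= 1.
  by move=> n; have /andP[h1 h2] := h n; rewrite ger0_norm.
rewrite (liminfE' hc); apply: (@le_trans _ _ (infs c 0)).
  apply: lb_le_inf; first by exists (c 0%N); exists 0%N.
  by move=> _ [k _ <-]; have /andP[] := h k.
apply: ub_le_sup; last by exists 0%N.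
exists 1 => _ [n _ <-]; apply: le_trans (infs_le hc (leqnn n)) _.
by have /andP[] := h n.
Qed.

Lemma twoN (d : R) : 0 < d -> exists N, (2%:R ^- N) < d.
Proof.
move=> d0; exists (Num.trunc d^-1).+1.
have h1 := truncnS_gt (d^-1).
set n := (Num.trunc d^-1).+1 in h1 *.
have h2 : (n%:R : R) <= 2%:R ^+ n by rewrite -natrX ler_nat ltnW // ltn_expl.
have h3 : d^-1 < 2%:R ^+ n by exact: lt_le_trans h1 h2.
rewrite invf_plt ?posrE ?exprn_gt0 //.
Qed.
End T.

End MF.
Import MF.

Local Open Scope classical_set_scope.
Local Open Scope ring_scope.

Theorem proposition17 (R : realType) (p : seq bool -> R) (w : nat -> bool) :
  forecasting_system p p ->
  temporal_fun p ->
  computable_fs p p ->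
  wCH_random p p w ->
  `[limn_inf (fun n => p (path_prefix w n)), limn_sup (fun n => p (path_prefix w n))]
    `<=` I_wCH w.
Proof.
move=> hfs htemp [ql [qh [hql [hqh happ]]]] hW x.
rewrite /= in_itv /= => /andP[Lx xU].
move=> a b [a0 [ab b1]] hWab.
have hp01 : forall s, 0 <= p s <= 1.
  by move=> s; have [h1 [h2 h3]] := hfs s; rewrite h1 /=; apply: le_trans h3.
set c := fun n => p (path_prefix w n) in Lx xU *.
have hc : forall n, `|c n| <= 1.
  by move=> n; have /andP[h1 h2] := hp01 (path_prefix w n); rewrite ger0_norm.
have cE : forall k, c k = p (nseq k false).
  by move=> k; apply: htemp; rewrite size_mkseq size_nseq.
have app : forall k N, c k - 2%:R ^- N < ratr (ql (nseq k false) N) < c k + 2%:R ^- N.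
  move=> k N; have [h _] := happ (nseq k false) N.
  by move: h; rewrite -cE ltr_distlC.
have epos : forall N : nat, 0 < 2%:R ^- N :> R by move=> N; rewrite invr_gt0 exprn_gt0.
have htS : forall (P : seq bool -> bool), temporal_fun (fun s => P (nseq (size s) false)).
  by move=> P s t h; rewrite h.
apply/andP; split.
- apply: le_trans Lx; rewrite leNgt; apply/negP => La.
  have L0 : 0 <= limn_inf c by apply: liminf_ge0 => n; exact: hp01.
  set L := limn_inf c in La L0.
  have d0 : 0 < (a - L) / 3 by rewrite divr_gt0 // subr_gt0.
  set d := (a - L) / 3 in d0.
  have [r] := @rat_in_itvoo R (L + d) (a - d) ltac:(rewrite /d; lra).
  rewrite in_itv /= => /andP[hr1 hr2].
  have [N hN] := twoN d0.
  have eN := epos N; set e := 2%:R ^- N in hN eN.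
  have r0 : (0 <= r)%R by rewrite -(ler0q R); lra.
  have [recS _] := sel_rec N hql r0.
  set S := fun s => (ql (nseq (size s) false) N < r)%R in recS.
  have selE k : S (path_prefix w k) = (ql (nseq k false) N < r)%R by rewrite /S size_mkseq.
  have tS : temporal_fun S by move=> s t h; rewrite /S h.
  have io : forall N0, exists2 k, (N0 <= k)%N & S (path_prefix w k).
    move=> N0; have d'0 : 0 < ratr r - e - L by lra.
    have [k hk hck] := io_lo hc d'0 N0; exists k => //.
    move: hck; rewrite selE -(ltr_rat R) -/L; have /andP[] := app k N; rewrite -/e; lra.
  have [_ h1] := hW S recS tS (count_inf io).
  have [h2 _] := hWab S recS tS (count_inf io).
  apply: (@part_lo R p w S a (ratr r + e) hp01) => //.
  + by rewrite a0 /=; apply: le_trans b1.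
  + by rewrite /d in hN hr2; lra.
  + move=> k; rewrite selE -(ltr_rat R) => h; have /andP[] := app k N; rewrite -/e -/(c k); lra.
- apply: (le_trans xU); rewrite leNgt; apply/negP => Ub.
  set U := limn_sup c in Ub.
  have d0 : 0 < (U - b) / 3 by rewrite divr_gt0 // subr_gt0.
  set d := (U - b) / 3 in d0.
  have [r] := @rat_in_itvoo R (b + d) (U - d) ltac:(rewrite /d; lra).
  rewrite in_itv /= => /andP[hr1 hr2].
  have [N hN] := twoN d0.
  have eN := epos N; set e := 2%:R ^- N in hN eN.
  have r0 : (0 <= r)%R by rewrite -(ler0q R); lra.
  have [_ recS] := sel_rec N hql r0.
  set S := fun s => (r < ql (nseq (size s) false) N)%R in recS.
  have selE k : S (path_prefix w k) = (r < ql (nseq k false) N)%R by rewrite /S size_mkseq.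
  have tS : temporal_fun S by move=> s t h; rewrite /S h.
  have io : forall N0, exists2 k, (N0 <= k)%N & S (path_prefix w k).
    move=> N0; have d'0 : 0 < U - (ratr r + e) by lra.
    have [k hk hck] := io_hi hc d'0 N0; exists k => //.
    move: hck; rewrite selE -(ltr_rat R) -/U; have /andP[] := app k N; rewrite -/e; lra.
  have [_ h1] := hWab S recS tS (count_inf io).
  have [h2 _] := hW S recS tS (count_inf io).
  apply: (@part_hi R p w S b (ratr r - e) hp01) => //.
  + by rewrite b1 andbT; apply: le_trans ab.
  + by rewrite /d in hN hr1; lra.
  + move=> k; rewrite selE -(ltr_rat R) => h; have /andP[] := app k N; rewrite -/e -/(c k); lra.
Qed.
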